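(* Let $T_l$ be a $2m$ deck-shuffler IET and $x\in[0,1)$. Then $x$ is periodic for $T_l$ with minimal period $n$ if and only if the sequence $\mathcal{H}_l(x)$ is periodic with minimal period $n$.
   Context: A $2m$ deck-shuffler IET $T_l$ is the map $[0,1)\to[0,1)$ determined by a length vector $l$ giving a partition of $[0,1)$ into consecutive left-closed right-open intervals $A_1<\dots<A_m<B_1<\dots<B_m$ of positive lengths, with $T_l(x)=x+|B_1|+\dots+|B_i|$ for $x\in A_i$ and $T_l(x)=x-|A_i|-\dots-|A_m|$ for $x\in B_i$. Let $B=B_1\cup\dots\cup B_m$. The coding $\mathcal{H}_l:[0,1)\to\{0,1\}^{\mathbb{Z}_{\ge0}}$ is $\mathcal{H}_l(x)=(\chi_B(T_l^n x))_{n\ge0}$; a sequence $(s_k)$ is periodic with minimal period $n$ if $s_{k+n}=s_k$ for all $k$ and $n$ is the least positive such integer. *)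

(* Defs.v *)
From Stdlib Require Import Reals.
Open Scope R_scope.

Fixpoint psum (f : nat -> R) (k : nat) : R :=
  match k with
  | O => 0
  | S k' => psum f k' + f k'
  end.

Definition ind (lo hi x : R) : R :=
  if Rle_dec lo x then (if Rlt_dec x hi then 1 else 0) else 0.

(* The length vector l is given by a : nat -> R (|A_{i+1}| = a i, i < m)
   and b : nat -> R (|B_{i+1}| = b i, i < m), 0-indexed. *)
Definition A_lo (m : nat) (a b : nat -> R) (i : nat) : R := psum a i.
Definition A_hi (m : nat) (a b : nat -> R) (i : nat) : R := psum a (S i).
Definition B_lo (m : nat) (a b : nat -> R) (i : nat) : R := psum a m + psum b i.
Definition B_hi (m : nat) (a b : nat -> R) (i : nat) : R := psum a m + psum b (S i).

Definition tailA (m : nat) (a : nat -> R) (i : nat) : R := psum a m - psum a i.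

(* On x in A_{i+1} it adds |B_1|+...+|B_{i+1}|,
   on x in B_{i+1} it subtracts |A_{i+1}|+...+|A_m|.  (The intervals are
   pairwise disjoint, so at most one indicator is nonzero; outside [0,1)
   T is the identity, which is irrelevant.) *)
Fixpoint shift_sum (m : nat) (a b : nat -> R) (x : R) (k : nat) : R :=
  match k with
  | O => 0
  | S i => shift_sum m a b x i
           + ind (A_lo m a b i) (A_hi m a b i) x * psum b (S i)
           - ind (B_lo m a b i) (B_hi m a b i) x * tailA m a i
  end.

Definition T (m : nat) (a b : nat -> R) (x : R) : R := x + shift_sum m a b x m.

Definition inB (m : nat) (a b : nat -> R) (x : R) : bool :=
  if Rle_dec (psum a m) x then (if Rlt_dec x 1 then true else false) else false.

Definition coding (m : nat) (a b : nat -> R) (x : R) : nat -> bool :=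
  fun k => inB m a b (Nat.iter k (T m a b) x).

Definition deck_lengths (m : nat) (a b : nat -> R) : Prop :=
  (forall i, (i < m)%nat -> 0 < a i) /\
  (forall i, (i < m)%nat -> 0 < b i) /\
  psum a m + psum b m = 1.

Definition periodic_point_min (f : R -> R) (x : R) (n : nat) : Prop :=
  (0 < n)%nat /\ Nat.iter n f x = x /\
  (forall k, (0 < k)%nat -> Nat.iter k f x = x -> (n <= k)%nat).

Definition seq_periodic_min {A : Type} (s : nat -> A) (n : nat) : Prop :=
  (0 < n)%nat /\ (forall k, s (k + n)%nat = s k) /\
  (forall p, (0 < p)%nat -> (forall k, s (k + p)%nat = s k) -> (n <= p)%nat).

(* Main.v *)
Require Import Defs.
From Stdlib Require Import Reals.
From Stdlib Require Import Arith Lia Lra.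
Open Scope R_scope.
Require Import Defs.

Lemma psum_mono f i j : (forall k, (k < j)%nat -> 0 <= f k) -> (i <= j)%nat -> psum f i <= psum f j.
Proof.
  intros Hf Hij. induction j as [|j IH].
  - assert (i = 0%nat) by lia. subst. lra.
  - destruct (Nat.eq_dec i (S j)) as [->|Hne]. lra.
    simpl. assert (0 <= f j) by (apply Hf; lia).
    assert (psum f i <= psum f j) by (apply IH; [intros; apply Hf; lia | lia]). lra.
Qed.

Lemma locate f n x : (forall k, (k < n)%nat -> 0 < f k) -> 0 <= x < psum f n ->
  exists i, (i < n)%nat /\ psum f i <= x < psum f (S i).
Proof.
  intros Hf Hx. induction n as [|n IH].
  - simpl in Hx. lra.
  - destruct (Rlt_dec x (psum f n)).
    + destruct IH as [i [Hi Hi2]]. intros; apply Hf; lia. lra.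
      exists i. split; [lia|lra].
    + exists n. split; [lia|]. simpl in *. lra.
Qed.

Ltac indsimp := unfold ind; repeat (destruct Rle_dec); repeat (destruct Rlt_dec); try lra.

Lemma shiftA m a b x i : deck_lengths m a b -> (i < m)%nat -> psum a i <= x < psum a (S i) ->
  forall k, (k <= m)%nat -> shift_sum m a b x k = if Nat.ltb i k then psum b (S i) else 0.
Proof.
  intros [Ha [Hb Hs]] Hi Hx k. induction k as [|k IH]; intros Hk.
  - reflexivity.
  - simpl shift_sum. rewrite IH by lia.
    assert (HB: ind (B_lo m a b k) (B_hi m a b k) x = 0).
    { unfold B_lo. assert (psum a (S i) <= psum a m) by (apply psum_mono; [intros; left; apply Ha; lia|lia]).
      assert (0 <= psum b k) by (apply (psum_mono b 0 k); [intros; left; apply Hb; lia|lia]).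
      indsimp. }
    rewrite HB.
    destruct (Nat.lt_total k i) as [Hlt|[Heq|Hgt]].
    + assert (psum a (S k) <= psum a i) by (apply psum_mono; [intros; left; apply Ha; lia|lia]).
      assert (ind (A_lo m a b k) (A_hi m a b k) x = 0) as -> by (unfold A_hi; indsimp).
      destruct (Nat.ltb_spec i k); destruct (Nat.ltb_spec i (S k)); try lia. simpl; lra.
    + subst k. assert (ind (A_lo m a b i) (A_hi m a b i) x = 1) as -> by (unfold A_lo, A_hi; indsimp).
      destruct (Nat.ltb_spec i i); destruct (Nat.ltb_spec i (S i)); try lia. simpl; lra.
    + assert (psum a (S i) <= psum a k) by (apply psum_mono; [intros; left; apply Ha; lia|lia]).
      assert (ind (A_lo m a b k) (A_hi m a b k) x = 0) as -> by (unfold A_lo; indsimp).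
      destruct (Nat.ltb_spec i k); destruct (Nat.ltb_spec i (S k)); try lia. simpl; lra.
Qed.

Lemma shiftB m a b x i : deck_lengths m a b -> (i < m)%nat ->
  psum a m + psum b i <= x < psum a m + psum b (S i) ->
  forall k, (k <= m)%nat -> shift_sum m a b x k = if Nat.ltb i k then - tailA m a i else 0.
Proof.
  intros [Ha [Hb Hs]] Hi Hx k. induction k as [|k IH]; intros Hk.
  - reflexivity.
  - simpl shift_sum. rewrite IH by lia.
    assert (HA: ind (A_lo m a b k) (A_hi m a b k) x = 0).
    { unfold A_hi. assert (psum a (S k) <= psum a m) by (apply psum_mono; [intros; left; apply Ha; lia|lia]).
      assert (0 <= psum b i) by (apply (psum_mono b 0 i); [intros; left; apply Hb; lia|lia]).
      indsimp. }
    rewrite HA.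
    destruct (Nat.lt_total k i) as [Hlt|[Heq|Hgt]].
    + assert (psum b (S k) <= psum b i) by (apply psum_mono; [intros; left; apply Hb; lia|lia]).
      assert (ind (B_lo m a b k) (B_hi m a b k) x = 0) as -> by (unfold B_hi; indsimp).
      destruct (Nat.ltb_spec i k); destruct (Nat.ltb_spec i (S k)); try lia. simpl; lra.
    + subst k. assert (ind (B_lo m a b i) (B_hi m a b i) x = 1) as -> by (unfold B_lo, B_hi; indsimp).
      destruct (Nat.ltb_spec i i); destruct (Nat.ltb_spec i (S i)); try lia. simpl; lra.
    + assert (psum b (S i) <= psum b k) by (apply psum_mono; [intros; left; apply Hb; lia|lia]).
      assert (ind (B_lo m a b k) (B_hi m a b k) x = 0) as -> by (unfold B_lo; indsimp).
      destruct (Nat.ltb_spec i k); destruct (Nat.ltb_spec i (S k)); try lia. simpl; lra.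
Qed.

Lemma TA m a b x i : deck_lengths m a b -> (i < m)%nat -> psum a i <= x < psum a (S i) ->
  T m a b x = x + psum b (S i).
Proof.
  intros D Hi Hx. unfold T. rewrite (shiftA m a b x i D Hi Hx m) by lia.
  destruct (Nat.ltb_spec i m); [reflexivity|lia].
Qed.

Lemma TB m a b x i : deck_lengths m a b -> (i < m)%nat ->
  psum a m + psum b i <= x < psum a m + psum b (S i) ->
  T m a b x = x - tailA m a i.
Proof.
  intros D Hi Hx. unfold T. rewrite (shiftB m a b x i D Hi Hx m) by lia.
  destruct (Nat.ltb_spec i m); [lra|lia].
Qed.

Lemma locA m a b x : deck_lengths m a b -> 0 <= x < psum a m ->
  exists i, (i < m)%nat /\ psum a i <= x < psum a (S i).
Proof. intros [Ha _] Hx. apply locate; auto. Qed.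

Lemma locB m a b x : deck_lengths m a b -> psum a m <= x < 1 ->
  exists i, (i < m)%nat /\ psum a m + psum b i <= x < psum a m + psum b (S i).
Proof.
  intros [Ha [Hb Hs]] Hx. destruct (locate b m (x - psum a m)) as [i [Hi Hi2]]; auto. lra.
  exists i. split; auto; lra.
Qed.

Lemma T_range m a b x : deck_lengths m a b -> 0 <= x < 1 -> 0 <= T m a b x < 1.
Proof.
  intros D Hx. pose proof D as [Ha [Hb Hs]].
  destruct (Rlt_dec x (psum a m)).
  - destruct (locA m a b x D) as [i [Hi Hx2]]. lra.
    rewrite (TA m a b x i D Hi Hx2).
    assert (psum a (S i) <= psum a m) by (apply psum_mono; [intros; left; apply Ha; lia|lia]).
    assert (psum b (S i) <= psum b m) by (apply psum_mono; [intros; left; apply Hb; lia|lia]).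
    assert (0 <= psum b (S i)) by (apply (psum_mono b 0); [intros; left; apply Hb; lia|lia]).
    lra.
  - destruct (locB m a b x D) as [i [Hi Hx2]]. lra.
    rewrite (TB m a b x i D Hi Hx2). unfold tailA.
    assert (psum a i <= psum a m) by (apply psum_mono; [intros; left; apply Ha; lia|lia]).
    assert (0 <= psum a i) by (apply (psum_mono a 0); [intros; left; apply Ha; lia|lia]).
    assert (0 <= psum b i) by (apply (psum_mono b 0); [intros; left; apply Hb; lia|lia]).
    lra.
Qed.

Lemma core m a b u v : deck_lengths m a b -> 0 <= u < 1 -> 0 <= v < 1 ->
  inB m a b u = inB m a b v -> u < v -> v - u <= T m a b v - T m a b u.
Proof.
  intros D Hu Hv Hin Huv. pose proof D as [Ha [Hb Hs]].
  unfold inB in Hin.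
  destruct (Rlt_dec u (psum a m)).
  - assert (v < psum a m).
    { destruct (Rle_dec (psum a m) u); try lra. destruct (Rle_dec (psum a m) v); auto; try lra.
      destruct (Rlt_dec v 1); [discriminate|lra]. }
    destruct (locA m a b u D) as [i [Hi Hx2]]. lra.
    destruct (locA m a b v D) as [j [Hj Hy2]]. lra.
    rewrite (TA m a b u i D Hi Hx2), (TA m a b v j D Hj Hy2).
    assert (i <= j)%nat.
    { destruct (Nat.le_gt_cases i j); auto.
      assert (psum a (S j) <= psum a i) by (apply psum_mono; [intros; left; apply Ha; lia|lia]). lra. }
    assert (psum b (S i) <= psum b (S j)) by (apply psum_mono; [intros; left; apply Hb; lia|lia]).
    lra.
  - destruct (locB m a b u D) as [i [Hi Hx2]]. lra.
    destruct (locB m a b v D) as [j [Hj Hy2]]. lra.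
    rewrite (TB m a b u i D Hi Hx2), (TB m a b v j D Hj Hy2). unfold tailA.
    assert (i <= j)%nat.
    { destruct (Nat.le_gt_cases i j); auto.
      assert (psum b (S j) <= psum b i) by (apply psum_mono; [intros; left; apply Hb; lia|lia]). lra. }
    assert (psum a i <= psum a j) by (apply psum_mono; [intros; left; apply Ha; lia|lia]).
    lra.
Qed.

Lemma iter_range m a b x : deck_lengths m a b -> 0 <= x < 1 ->
  forall k, 0 <= Nat.iter k (T m a b) x < 1.
Proof. intros D Hx k. induction k; simpl; auto. apply T_range; auto. Qed.

Lemma key m a b x p : deck_lengths m a b -> 0 <= x < 1 ->
  (forall k, coding m a b x (k + p) = coding m a b x k) -> Nat.iter p (T m a b) x = x.
Proof.
  intros D Hx Hc. set (X := fun k => Nat.iter k (T m a b) x).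
  assert (HR : forall k, 0 <= X k < 1) by (apply iter_range; auto).
  assert (HS : forall k, X (S k) = T m a b (X k)) by reflexivity.
  assert (HC : forall k, inB m a b (X (k + p)%nat) = inB m a b (X k)) by exact Hc.
  change (X p = X 0%nat).
  destruct (Rtotal_order (X 0%nat) (X p)) as [Hlt|[Heq|Hgt]]; auto; exfalso.
  - set (d := X p - X 0%nat).
    assert (C1 : forall k, d <= X (k + p)%nat - X k).
    { induction k. unfold d; rewrite Nat.add_0_l; lra.
      replace (S k + p)%nat with (S (k + p)) by lia. rewrite !HS.
      pose proof (core m a b (X k) (X (k+p)%nat) D (HR k) (HR (k+p)%nat) (eq_sym (HC k))).
      assert (0 < d) by (unfold d; lra). lra. }
    assert (C2 : forall j, X 0%nat + INR j * d <= X (j * p)%nat).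
    { induction j. simpl. lra. rewrite S_INR.
      replace (S j * p)%nat with (j * p + p)%nat by lia.
      specialize (C1 (j * p)%nat). lra. }
    assert (0 < d) by (unfold d; lra).
    destruct (INR_unbounded (1 / d)) as [j Hj].
    specialize (C2 j). pose proof (HR 0%nat). pose proof (HR (j*p)%nat).
    assert (INR j * d > 1).
    { apply Rmult_gt_compat_r with (r := d) in Hj; auto. field_simplify in Hj; lra. }
    lra.
  - set (d := X 0%nat - X p).
    assert (C1 : forall k, d <= X k - X (k + p)%nat).
    { induction k. unfold d; rewrite Nat.add_0_l; lra.
      replace (S k + p)%nat with (S (k + p)) by lia. rewrite !HS.
      pose proof (core m a b (X (k+p)%nat) (X k) D (HR (k+p)%nat) (HR k) (HC k)).
      assert (0 < d) by (unfold d; lra). lra. }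
    assert (C2 : forall j, X (j * p)%nat <= X 0%nat - INR j * d).
    { induction j. simpl. lra. rewrite S_INR.
      replace (S j * p)%nat with (j * p + p)%nat by lia.
      specialize (C1 (j * p)%nat). lra. }
    assert (0 < d) by (unfold d; lra).
    destruct (INR_unbounded (1 / d)) as [j Hj].
    specialize (C2 j). pose proof (HR 0%nat). pose proof (HR (j*p)%nat).
    assert (INR j * d > 1).
    { apply Rmult_gt_compat_r with (r := d) in Hj; auto. field_simplify in Hj; lra. }
    lra.
Qed.

Lemma per_coding m a b x p : Nat.iter p (T m a b) x = x ->
  forall k, coding m a b x (k + p) = coding m a b x k.
Proof. intros H k. unfold coding. rewrite Nat.iter_add, H. reflexivity. Qed.

Theorem lemma4 (m : nat) (a b : nat -> R) (x : R) (n : nat) :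
  deck_lengths m a b ->
  0 <= x < 1 ->
  (periodic_point_min (T m a b) x n <-> seq_periodic_min (coding m a b x) n).
Proof.
  intros D Hx. unfold periodic_point_min, seq_periodic_min. split.
  - intros [Hn [Hp Hmin]]. split; auto. split. apply per_coding; auto.
    intros p Hp0 Hper. apply Hmin; auto. apply key; auto.
  - intros [Hn [Hp Hmin]]. split; auto. split. apply key; auto.
    intros k Hk Hper. apply Hmin; auto. apply per_coding; auto.
Qed.
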